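(* Let $c$ be a prefix equivariant statistic and $\theta>0$. Let $2\le k\le N$, $p=e_{k-1}=12\cdots(k-1)$ and $q=e_k=12\cdots k$. Let $R$ be the set of permutations $r\in\mathfrak S_k$ with $r\ne q$ whose $(k-1)$-st prefix flattening equals $p$. Then $$\widehat S^c(p)=\widehat{\bar S}(q)+\widehat S^c(q)\sum_{r\in R}\theta^{c(r)-c(q)},\qquad \widehat S(p)=\widehat S(q)\sum_{r\in R}\theta^{c(r)-c(q)}.$$
   Context: Permutations of $\{1,\dots,m\}$ are written in one-line notation; $\mathfrak S_m$ is the set of all of them. Fix $N\ge1$, a statistic $c:\bigcup_{m=1}^N\mathfrak S_m\to\mathbb Z_{\ge0}$ and a real $\theta>0$. Prefixes and containment: - A prefix is an element of $\bigcup_{m=1}^N\mathfrak S_m$. - $\pi^{(i)}\in\mathfrak S_i$ denotes the unique permutation with the same relative order as $\pi_1,\dots,\pi_i$. - A prefix $r\in\mathfrak S_n$ contains $p\in\mathfrak S_m$ ($m\le n$) if $r^{(m)}=p$. - For $p\in\mathfrak S_m$ and $\pi\in\mathfrak S_N$: $\pi$ is $p$-prefixed if $\pi^{(m)}=p$, and $p$-winnable if moreover $\pi_m=N$. Probabilities: - $D(p)=\sum_{p\text{-prefixed }\pi\in\mathfrak S_N}\theta^{c(\pi)}$. - $S(p)=\big(\sum_{p\text{-winnable }\pi}\theta^{c(\pi)}\big)/D(p)$. - $S^c(p)=0$ if $p\in\mathfrak S_N$; for $p\in\mathfrak S_m$ with $m<N$, $S^c(p)=\big(\sum_{q'\in\mathfrak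 S_{m+1}\text{ containing }p}D(q')\bar S(q')\big)/D(p)$. - $\bar S(p)=\max(S(p),S^c(p))$. Numerators over the standard denominator $D(p)$ are written $\widehat S(p)=D(p)S(p)$, $\widehat S^c(p)=D(p)S^c(p)$ and $\widehat{\bar S}(p)=D(p)\bar S(p)$. Let $e_k=12\cdots k$. For $q\in\mathfrak S_k$ and $\pi\in\mathfrak S_m$ ($k\le m\le N$) with $\pi_1<\cdots<\pi_k$, $\sigma_q\cdot\pi\in\mathfrak S_m$ is given by $(\sigma_q\cdot\pi)_i=\pi_{q_i}$ for $i\le k$ and $(\sigma_q\cdot\pi)_i=\pi_i$ for $i>k$. The statistic $c$ is prefix equivariant if $c(\pi)-c(\sigma_q\cdot\pi)=c(e_k)-c(q)$ for all $k$, all $q\in\mathfrak S_k$, and all such $\pi$. *)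

(* Defs.v *)
From HB Require Import structures.
From mathcomp Require Import all_boot all_order all_algebra all_fingroup.
Set Implicit Arguments. Unset Strict Implicit. Unset Printing Implicit Defensive.
Import Order.TTheory GRing.Theory Num.Theory.

(* Permutations of {1..m} are modelled by 'S_m = {perm 'I_m}; positions and
   values are shifted to 0..m-1 (only relative order matters).
   The one-line entry pi_i (1-based) is [pv pi (i-1)].                     *)

Definition pv (m : nat) (s : 'S_m) (i : nat) : nat :=
  if insub i is Some j then val (s j) else 0.

(* r in S_n contains p in S_m : m <= n and r^{(m)} = p, i.e. the first m
   entries of r have the same relative order as p. *)
Definition contains (n m : nat) (r : 'S_n) (p : 'S_m) : bool :=
  (m <= n) && [forall a : 'I_m, forall b : 'I_m,
                 (pv r a < pv r b) == (p a < p b)].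

Definition statistic := forall m : nat, 'S_m -> nat.

(* prefix equivariance (stated with sigma_q . pi described entrywise) *)
Definition prefix_equivariant (N : nat) (c : statistic) : Prop :=
  forall (k m : nat) (q : 'S_k) (pi spi : 'S_m),
    1 <= k -> k <= m -> m <= N ->
    (forall i j, i < j -> j < k -> pv pi i < pv pi j) ->
    (forall i, i < k -> pv spi i = pv pi (pv q i)) ->
    (forall i, k <= i -> i < m -> pv spi i = pv pi i) ->
    ((c m pi)%:Z - (c m spi)%:Z = (c k 1%g)%:Z - (c k q)%:Z)%R.

Section Probabilities.
Local Open Scope ring_scope.
Variables (R : realFieldType) (N : nat) (c : statistic) (theta : R).

Definition Dw (m : nat) (p : 'S_m) : R :=
  \sum_(pi : 'S_N | contains pi p) theta ^+ (@c N pi).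

(* numerator of S(p): p-winnable permutations (pi_m = N) *)
Definition Swin (m : nat) (p : 'S_m) : R :=
  \sum_(pi : 'S_N | contains pi p && (pv pi m.-1 == N.-1)%N)
     theta ^+ (@c N pi).

Definition Sp (m : nat) (p : 'S_m) : R := Swin p / Dw p.

(* S^c with fuel; the actual S^c(p) uses fuel N - m *)
Fixpoint Scf (f : nat) (m : nat) (p : 'S_m) : R :=
  match f with
  | 0 => 0
  | f'.+1 => (\sum_(q' : 'S_m.+1 | contains q' p)
                 Dw q' * Num.max (Sp q') (Scf f' q')) / Dw p
  end.

Definition Sc (m : nat) (p : 'S_m) : R := Scf (N - m) p.

Definition Sbar (m : nat) (p : 'S_m) : R := Num.max (Sp p) (Sc p).

Definition Shat (m : nat) (p : 'S_m) : R := Dw p * Sp p.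
Definition Schat (m : nat) (p : 'S_m) : R := Dw p * Sc p.
Definition Sbarhat (m : nat) (p : 'S_m) : R := Dw p * Sbar p.

End Probabilities.

(* Main.v *)
Require Import Defs.
From HB Require Import structures.
From mathcomp Require Import all_boot all_order all_algebra all_fingroup.
From mathcomp Require Import zify lra.
Set Implicit Arguments. Unset Strict Implicit. Unset Printing Implicit Defensive.
Import Order.TTheory GRing.Theory Num.Theory.

Lemma pvE m (s : 'S_m) (i : 'I_m) : pv s i = val (s i).
Proof. by rewrite /pv valK. Qed.

Lemma pv_out m (s : 'S_m) i : (m <= i)%N -> pv s i = 0%N.
Proof. by move=> h; rewrite /pv insubF // ltnNge h. Qed.

Lemma pv_lt m (s : 'S_m) i : (i < m)%N -> (pv s i < m)%N.
Proof. by move=> h; rewrite (pvE s (Ordinal h)) ltn_ord. Qed.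

Lemma pv_inj m (s : 'S_m) i j : (i < m)%N -> (j < m)%N -> pv s i = pv s j -> i = j.
Proof.
move=> hi hj; rewrite (pvE s (Ordinal hi)) (pvE s (Ordinal hj)).
by move/val_inj/perm_inj => [].
Qed.

Lemma pv1 m i : (i < m)%N -> pv (1%g : 'S_m) i = i.
Proof. by move=> h; rewrite (pvE _ (Ordinal h)) perm1. Qed.

Lemma pvM m (s t : 'S_m) i : (i < m)%N -> pv (s * t)%g i = pv t (pv s i).
Proof.
by move=> h; rewrite (pvE _ (Ordinal h)) (pvE _ (Ordinal h)) permM pvE.
Qed.

Section Ext.
Variable k : nat.

Definition ef (s : 'S_k) (i : nat) : nat := if (i < k)%N then pv s i else i.

Definition extf m (s : 'S_k) (i : 'I_m) : 'I_m := insubd i (ef s i).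

Definition ext m (s : 'S_k) : 'S_m := insubd (1%g : 'S_m) [ffun i => extf s i].

Lemma ef_lt (s : 'S_k) (m i : nat) : (k <= m)%N -> (i < m)%N -> (ef s i < m)%N.
Proof.
rewrite /ef => km im; case: ifP => // ik.
by apply: leq_trans km; apply: pv_lt.
Qed.

Lemma ef_inj (s : 'S_k) (i j : nat) : ef s i = ef s j -> i = j.
Proof.
rewrite /ef; case: ifP => ik; case: ifP => jk.
- exact: pv_inj.
- by move=> e; move: (pv_lt s ik); rewrite e jk.
- by move=> e; move: (pv_lt s jk); rewrite -e ik.
- by [].
Qed.

Lemma extE m (s : 'S_k) (i : 'I_m) : (k <= m)%N -> val (ext m s i) = ef s i.
Proof.
move=> km.
have inj : injective (@extf m s).
  move=> a b; rewrite /extf => e; apply: val_inj; apply: (@ef_inj s).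
  by move: (congr1 val e); rewrite !val_insubd !ef_lt.
rewrite /ext -pvalE insubdK; last by apply/injectiveP=> a b; rewrite !ffunE; apply: inj.
by rewrite ffunE /extf val_insubd ef_lt.
Qed.

Lemma pv_ext m (s : 'S_k) i : (k <= m)%N -> (i < m)%N -> pv (ext m s) i = ef s i.
Proof. by move=> km im; rewrite (pvE _ (Ordinal im)) extE. Qed.

Lemma pv_extM m (s : 'S_k) (t : 'S_m) i : (k <= m)%N -> (i < m)%N ->
  pv (ext m s * t)%g i = pv t (ef s i).
Proof. by move=> km im; rewrite pvM // pv_ext. Qed.

Lemma ext_k (s : 'S_k) : ext k s = s.
Proof. by apply/permP => i; apply: val_inj; rewrite extE // /ef ltn_ord pvE. Qed.

Definition inc n (pi : 'S_n) := forall a b, (a < b)%N -> (b < k)%N -> (pv pi a < pv pi b)%N.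

End Ext.

Lemma containsE n m (r : 'S_n) (p : 'S_m) : contains r p ->
  (m <= n)%N /\ forall a b, (a < m)%N -> (b < m)%N -> (pv r a < pv r b) = (pv p a < pv p b).
Proof.
case/andP=> mn /forallP H; split => // a b am bm.
have := H (Ordinal am) => /forallP /(_ (Ordinal bm)) /eqP.
by rewrite (pvE p (Ordinal am)) (pvE p (Ordinal bm)).
Qed.

Lemma containsI n m (r : 'S_n) (p : 'S_m) : (m <= n)%N ->
  (forall a b, (a < m)%N -> (b < m)%N -> (pv r a < pv r b) = (pv p a < pv p b)) ->
  contains r p.
Proof.
move=> mn H; apply/andP; split => //; apply/forallP => a; apply/forallP => b.
by rewrite H // !pvE.
Qed.

Lemma contains_ext k n m (s : 'S_k) (pi : 'S_n) (t : 'S_m) : (k <= m)%N ->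
  contains (ext n s * pi)%g (ext m s * t)%g = contains pi t.
Proof.
move=> km; case mn: (m <= n)%N; last first.
  by rewrite /contains mn.
have kn := leq_trans km mn.
apply/idP/idP => /containsE [_ H]; apply: containsI => // a b am bm.
- have am' := ltn_ord ((ext m s)^-1%g (Ordinal am)).
  have bm' := ltn_ord ((ext m s)^-1%g (Ordinal bm)).
  have := H _ _ am' bm'.
  rewrite !pv_extM ?(leq_trans am' mn) ?(leq_trans bm' mn) //.
  by rewrite -!extE // !permKV.
- rewrite !pv_extM ?(leq_trans am mn) ?(leq_trans bm mn) //.
  by apply: H; apply: ef_lt.
Qed.

Lemma contains_inc k n m (pi : 'S_n) (t : 'S_m) : (k <= m)%N ->
  contains pi t -> inc k t -> inc k pi.
Proof.
move=> km /containsE [mn H] it a b ab bk.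
have bm := leq_trans bk km.
by rewrite H ?(ltn_trans ab bm) //; apply: it.
Qed.

Lemma inc1 k m : (k <= m)%N -> inc k (1%g : 'S_m).
Proof.
move=> km a b ab bk; have bm := leq_trans bk km.
by rewrite !pv1 // (ltn_trans ab bm).
Qed.

Lemma contains_trans n m l (pi : 'S_n) (u : 'S_m) (v : 'S_l) :
  contains pi u -> contains u v -> contains pi v.
Proof.
move=> /containsE [mn H1] /containsE [lm H2]; apply: containsI; first exact: leq_trans lm mn.
by move=> a b al bl; rewrite H1 ?(leq_trans al lm) ?(leq_trans bl lm) // H2.
Qed.

Lemma contains_sub n m l (pi : 'S_n) (u : 'S_m) (v : 'S_l) : (l <= m)%N ->
  contains pi u -> contains pi v -> contains u v.
Proof.
move=> lm /containsE [mn H1] /containsE [ln H2]; apply: containsI => // a b al bl.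
by rewrite -H1 ?(leq_trans al lm) ?(leq_trans bl lm) // H2.
Qed.

Lemma contains11 n m : (m <= n)%N -> contains (1%g : 'S_n) (1%g : 'S_m).
Proof.
move=> mn; apply: containsI => // a b am bm.
by rewrite !pv1 // ?(leq_trans am mn) ?(leq_trans bm mn).
Qed.


Lemma incr_id n (u : 'S_n) :
  (forall a b, (a < b)%N -> (b < n)%N -> (pv u a < pv u b)%N) -> u = 1%g.
Proof.
move=> H.
suff E : forall i, (i < n)%N -> pv u i = i.
  by apply/permP => i; apply: val_inj; rewrite perm1 -pvE E.
elim/ltn_ind => i IH im.
have C : ~~ (pv u i < i)%N.
  apply/negP => ji; have e := IH _ ji (ltn_trans ji im).
  have := pv_inj (pv_lt u im) im e.
  by move=> e'; move: ji; rewrite e' ltnn.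
set y := pv (u^-1)%g i.
have ym : (y < n)%N by apply: pv_lt.
have uy : pv u y = i by rewrite /y -pvM // mulVg pv1.
case: (ltngtP i y) => iy.
- by move: C; rewrite -{2}uy H.
- by have := IH _ iy ym; rewrite uy => e; move: iy; rewrite -e ltnn.
- by rewrite {1}iy uy.
Qed.

Lemma contains_same m (u v : 'S_m) : contains u v -> u = v.
Proof.
move=> /containsE [_ H].
suff : (v^-1 * u)%g = 1%g by move=> e; rewrite -(mulKVg v u) e mulg1.
apply: incr_id => a b ab bm.
have am := ltn_trans ab bm.
rewrite !pvM // H ?pv_lt // -!pvM // mulVg !pv1 //.
Qed.

Lemma contains_uniq n m (pi : 'S_n) (u u' : 'S_m) :
  contains pi u -> contains pi u' -> u = u'.
Proof. by move=> h1 h2; apply: contains_same; apply: (contains_sub (leqnn m) h1 h2). Qed.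

Section Std.
Variables (n m : nat) (pi : 'S_n).
Hypothesis mn : (m <= n)%N.

Definition rk (i : 'I_m) := #|[set a : 'I_m | (pv pi a < pv pi i)%N]|.

Lemma rk_ltm i : (rk i < m)%N.
Proof.
rewrite /rk -[X in (_ < X)%N]card_ord -cardsT; apply: proper_card.
apply/properP; split; first exact: subsetT.
by exists i; rewrite ?inE // ltnn.
Qed.

Lemma rk_lt (a b : 'I_m) : (pv pi a < pv pi b)%N = (rk a < rk b)%N.
Proof.
apply/idP/idP => h.
  apply: proper_card; apply/properP; split.
    by apply/subsetP => x; rewrite !inE => hx; apply: ltn_trans hx h.
  by exists a; rewrite !inE ?ltnn.
apply: contraTT h; rewrite -!leqNgt => h.
apply: subset_leq_card; apply/subsetP => x; rewrite !inE => hx.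
exact: leq_trans hx h.
Qed.

Lemma rk_inj : injective rk.
Proof.
move=> a b e; apply/eqP; apply: contraT => ne.
have an := leq_trans (ltn_ord a) mn; have bn := leq_trans (ltn_ord b) mn.
have : pv pi a != pv pi b.
  by apply: contra ne => /eqP /(pv_inj an bn) e'; apply/eqP/val_inj.
case: ltngtP => // h _.
- by move: h; rewrite rk_lt e ltnn.
- by move: h; rewrite rk_lt e ltnn.
Qed.

Definition stdf (i : 'I_m) : 'I_m := insubd i (rk i).
Definition std : 'S_m := insubd (1%g : 'S_m) [ffun i => stdf i].

Lemma stdE i : val (std i) = rk i.
Proof.
have inj : injective stdf.
  by move=> a b; rewrite /stdf => e; apply: rk_inj; move: (congr1 val e); rewrite !val_insubd !rk_ltm.
rewrite /std -pvalE insubdK; last by apply/injectiveP=> a b; rewrite !ffunE; apply: inj.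
by rewrite ffunE /stdf val_insubd rk_ltm.
Qed.

Lemma contains_std : contains pi std.
Proof.
apply: containsI => // a b am bm.
by rewrite (pvE std (Ordinal am)) (pvE std (Ordinal bm)) !stdE -rk_lt.
Qed.
End Std.

Section Prob.
Local Open Scope ring_scope.
Variables (R : realFieldType) (N : nat) (c : statistic) (theta : R) (k : nat).
Hypotheses (Heq : prefix_equivariant N c) (Ht : 0 < theta) (k1 : (1 <= k)%N) (kN : (k <= N)%N).

Local Notation Dw := (Dw N c theta).
Local Notation Swin := (Swin N c theta).
Local Notation Sp := (Sp N c theta).
Local Notation Scf := (Scf N c theta).

Lemma th_neq0 n : theta ^+ n != 0.
Proof. by rewrite expf_neq0 // gt_eqF. Qed.

Lemma th_ge0 n : 0 <= theta ^+ n.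
Proof. by rewrite exprn_ge0 // ltW. Qed.

Lemma weight (s : 'S_k) (pi : 'S_N) : inc k pi ->
  theta ^+ (@c N (ext N s * pi)%g) * theta ^+ (@c k 1%g) = theta ^+ (@c N pi) * theta ^+ (@c k s).
Proof.
move=> ip; rewrite -!exprD; congr (_ ^+ _).
have H1 : forall i, (i < k)%N -> pv (ext N s * pi)%g i = pv pi (pv s i).
  by move=> i ik; rewrite pv_extM ?(leq_trans ik kN) // /ef ik.
have H2 : forall i, (k <= i)%N -> (i < N)%N -> pv (ext N s * pi)%g i = pv pi i.
  by move=> i ki iN; rewrite pv_extM // /ef ltnNge ki.
have := Heq k1 kN (leqnn N) ip H1 H2.
lia.
Qed.

Lemma rel_ab (x b y z : R) : x * b = y * z -> b != 0 -> x = z * (y / b).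
Proof. by move=> e nb; rewrite mulrA (mulrC z y) -e mulfK. Qed.

Definition aa (s : 'S_k) := theta ^+ (@c k s) / theta ^+ (@c k 1%g).

Lemma aa_neq0 s : aa s != 0.
Proof. by rewrite /aa mulf_neq0 ?invr_eq0 ?th_neq0. Qed.

Lemma Dw_ext (s : 'S_k) m (t : 'S_m) : (k <= m)%N -> inc k t ->
  Dw (ext m s * t)%g = Dw t * aa s.
Proof.
move=> km it; apply: rel_ab (th_neq0 _).
rewrite /Defs.Dw (reindex_inj (mulgI (ext N s))) /= mulr_suml mulr_sumr.
apply: eq_big => pi; first by rewrite contains_ext.
rewrite contains_ext // => h.
by rewrite [RHS]mulrC; apply: weight; exact: contains_inc km h it.
Qed.

Lemma Swin_ext (s : 'S_k) m (t : 'S_m) : (k < m)%N -> inc k t ->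
  Swin (ext m s * t)%g = Swin t * aa s.
Proof.
move=> km it; apply: rel_ab (th_neq0 _).
rewrite /Defs.Swin (reindex_inj (mulgI (ext N s))) /= mulr_suml mulr_sumr.
apply: eq_big => pi.
  rewrite (contains_ext _ _ _ (ltnW km)); case h: (contains pi t) => //=.
  have [mN _] := containsE h.
  rewrite pv_extM //; last by apply: leq_trans mN; rewrite prednK // (leq_ltn_trans _ km).
  by rewrite /ef ltnNge -ltnS prednK ?km // (leq_ltn_trans _ km).
rewrite (contains_ext _ _ _ (ltnW km)) => /andP [h _]; rewrite [RHS]mulrC; apply: weight; exact: contains_inc (ltnW km) h it.
Qed.

Lemma Sp_ext (s : 'S_k) m (t : 'S_m) : (k < m)%N -> inc k t ->
  Sp (ext m s * t)%g = Sp t.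
Proof.
move=> km it; rewrite /Defs.Sp Swin_ext // Dw_ext ?(ltnW km) //.
by rewrite invfM mulrACA divff ?aa_neq0 // mulr1.
Qed.

Lemma Scf_ext (s : 'S_k) f : forall m (t : 'S_m), (k <= m)%N -> inc k t ->
  Scf f (ext m s * t)%g = Scf f t.
Proof.
elim: f => [|f IH] m t km it //=.
rewrite (reindex_inj (mulgI (ext m.+1 s))) /= Dw_ext //.
rewrite (eq_bigl (fun v => contains v t)); last by move=> v; rewrite (contains_ext _ _ _ km).
rewrite (eq_bigr (fun v => (Dw v * Num.max (Sp v) (Scf f v)) * aa s)).
  by rewrite -mulr_suml invfM mulrACA divff ?aa_neq0 // mulr1.
move=> v h; have iv := contains_inc km h it.
by rewrite Sp_ext ?ltnS // IH // ?(leqW km) // Dw_ext // ?(leqW km) // mulrAC.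
Qed.

Lemma Dw_ge0 m (t : 'S_m) : 0 <= Dw t.
Proof. by apply: sumr_ge0 => i _; apply: th_ge0. Qed.

Lemma Swin_ge0 m (t : 'S_m) : 0 <= Swin t.
Proof. by apply: sumr_ge0 => i _; apply: th_ge0. Qed.

Lemma Sp_ge0 m (t : 'S_m) : 0 <= Sp t.
Proof. by rewrite divr_ge0 ?Dw_ge0 ?Swin_ge0. Qed.

Lemma Scf_ge0 f : forall m (t : 'S_m), 0 <= Scf f t.
Proof.
elim: f => [|f IH] m t //=.
rewrite divr_ge0 ?Dw_ge0 // sumr_ge0 // => v _.
by rewrite mulr_ge0 ?Dw_ge0 // le_max Sp_ge0.
Qed.

Lemma Dw_gt0 m (t : 'S_m) (pi : 'S_N) : contains pi t -> 0 < Dw t.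
Proof.
move=> h; rewrite /Defs.Dw (bigD1 pi) //=.
have h1 : 0 < theta ^+ @c N pi by rewrite exprn_gt0.
have h2 : 0 <= \sum_(i | contains i t && (i != pi)) theta ^+ @c N i.
  by apply: sumr_ge0 => i _; apply: th_ge0.
lra.
Qed.

End Prob.

Lemma top_id K (r : 'S_K) : inc K.-1 r ->
  (forall a, (a < K.-1)%N -> (pv r a < pv r K.-1)%N) -> r = 1%g.
Proof.
move=> ir H; apply: incr_id => a b ab bK.
case: (ltngtP b K.-1) => hb.
- exact: ir.
- by move: hb bK; clear; lia.
- by rewrite hb; apply: H; rewrite -hb.
Qed.

Section Main.
Local Open Scope ring_scope.
Variables (R : realFieldType) (N : nat) (c : statistic) (theta : R) (k' : nat).
Hypotheses (Heq : prefix_equivariant N c) (Ht : 0 < theta) (kN : (k'.+2 <= N)%N).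

Local Notation K := k'.+2.
Local Notation p := (1%g : 'S_k'.+1).
Local Notation q := (1%g : 'S_K).

Lemma inc_p (r : 'S_K) : contains r p -> inc k'.+1 r.
Proof.
move=> /containsE [_ H] a b ab bk.
by rewrite H ?(ltn_trans ab bk) // !pv1 ?(ltn_trans ab bk).
Qed.

Lemma top_lt (pi : 'S_N) a j : (a < N)%N -> (j < N)%N -> a <> j -> pv pi j = N.-1 -> (pv pi a < N.-1)%N.
Proof.
move=> aN jN ne e.
have h1 := pv_lt pi aN.
have h2 : pv pi a <> pv pi j by move/(pv_inj aN jN).
rewrite e in h2; clear e; lia.
Qed.

Lemma Sp_R (r : 'S_K) : r != 1%g -> contains r p -> Sp N c theta r = 0.
Proof.
move=> nr hr; rewrite /Defs.Sp /Defs.Swin big1 ?mul0r // => pi /andP [h /eqP e].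
exfalso; move/eqP: nr; apply; apply: top_id; first exact: inc_p.
move=> a ak /=.
have [_ H] := containsE h.
rewrite -H ?(ltn_trans ak) //=.
move: e => /= e; rewrite e; apply: (top_lt (j := k'.+1)) => //; lia.
Qed.

Lemma r_top (r : 'S_K) : r != 1%g -> contains r p -> pv r k' = k'.+1.
Proof.
move=> nr hr; have ir := inc_p hr.
set j := pv (r^-1)%g k'.+1.
have jK : (j < K)%N by apply: pv_lt.
have rj : pv r j = k'.+1 by rewrite /j -pvM // mulVg pv1.
case: (ltngtP j k') => hj.
- have h1 := ir _ _ hj (ltnSn _).
  have h2 := pv_lt r (ltn_trans (ltnSn k') (ltnSn k'.+1)).
  by move: h1 h2; rewrite rj; clear; lia.
- have ej : j = k'.+1 by move: hj jK; clear; lia.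
  exfalso; move/eqP: nr; apply; apply: top_id => // a ak /=.
  have aK : (a < K)%N by apply: ltn_trans ak _.
  have h1 := pv_lt r aK.
  have h2 : pv r a <> pv r j by move/(pv_inj aK jK) => ea; move: ak; rewrite ea ej ltnn.
  move: h2; rewrite rj => h2; rewrite ej in rj; rewrite rj.
  by move: h1 h2; clear; lia.
- by rewrite hj in rj.
Qed.

Lemma theta_int (r : 'S_K) :
  theta ^ ((@c K r)%:Z - (@c K q)%:Z) = aa c theta r.
Proof.
by rewrite /aa expfzDr ?gt_eqF // -invr_expz -!exprnP.
Qed.


Lemma Dw_p_neq0 : Dw N c theta p != 0.
Proof. by rewrite gt_eqF // (Dw_gt0 c Ht (pi := 1%g)) // contains11 // ltnW. Qed.

Lemma Dw_q_neq0 : Dw N c theta q != 0.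
Proof. by rewrite gt_eqF // (Dw_gt0 c Ht (pi := 1%g)) // contains11. Qed.

Lemma part1 : Schat N c theta p = Sbarhat N c theta q + Schat N c theta q *
  \sum_(r : 'S_K | (r != q) && contains r p) theta ^ ((@c K r)%:Z - (@c K q)%:Z).
Proof.
rewrite /Schat /Sc.
have -> : (N - k'.+1 = (N - K).+1)%N by move: kN; clear; lia.
rewrite /= mulrC divfK ?Dw_p_neq0 //.
rewrite (bigD1 1%g) /=; last exact: contains11.
rewrite /Sbarhat /Sbar /Sc; congr (_ + _).
rewrite mulr_sumr; apply: eq_big => [u|u]; first by rewrite andbC.
move=> /andP [hu nu].
rewrite Sp_R // max_r ?Scf_ge0 // theta_int.
have eu : u = (ext K u * 1)%g by rewrite ext_k mulg1.
rewrite {1 2}eu (Dw_ext Heq Ht _ kN u (leqnn K) (inc1 (leqnn K))).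
rewrite [RHS]mulrAC; congr (_ * _); exact: (Scf_ext Heq Ht _ kN u _ (leqnn K) (inc1 (leqnn K))).
by [].
Qed.


Lemma Sh m (t : 'S_m) : Dw N c theta t != 0 -> Shat N c theta t = Swin N c theta t.
Proof. by move=> h; rewrite /Shat /Defs.Sp mulrC divfK. Qed.

Lemma part2 : Shat N c theta p = Shat N c theta q *
  \sum_(r : 'S_K | (r != q) && contains r p) theta ^ ((@c K r)%:Z - (@c K q)%:Z).
Proof.
have KN : (K <= N)%N := kN.
rewrite !Sh ?Dw_p_neq0 ?Dw_q_neq0 //.
rewrite {1}/Defs.Swin (partition_big (fun pi => std K pi) (fun r => (r != 1%g) && contains r p)) /=; last first.
  move=> pi /andP [h /eqP e]; apply/andP; split.
  - apply/eqP => es; have := contains_std pi KN; rewrite es => /containsE [_ H].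
    have := H k' k'.+1 (ltnW (ltnSn _)) (ltnSn _); rewrite !pv1 // ltnSn.
    have := pv_lt pi (kN : (k'.+1 < N)%N); rewrite e.
    by move: kN; clear; lia.
  - exact: contains_sub (contains_std pi KN) h.
rewrite mulr_sumr; apply: eq_bigr => r /andP [nr hr].
rewrite (eq_bigl (fun pi => contains pi r && (pv pi k' == N.-1))); last first.
  move=> pi; apply/idP/idP.
  - by move=> /andP [/andP [hp e] /eqP <-]; rewrite contains_std // e.
  - move=> /andP [h e]; rewrite (contains_trans h hr) e /=; apply/eqP.
    exact: contains_uniq (contains_std pi KN) h.
rewrite theta_int /aa.
apply: rel_ab (th_neq0 Ht _).
rewrite /Defs.Swin (reindex_inj (mulgI (ext N r))) /= mulr_suml mulr_sumr.
have CE : forall pi : 'S_N, contains (ext N r * pi)%g r = contains pi q.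
  by move=> pi; have := contains_ext r pi 1%g (leqnn K); rewrite ext_k mulg1.
apply: eq_big => pi.
  have -> : contains (ext N r * pi)%g r && (pv (ext N r * pi)%g k' == N.-1) =
     contains pi q && (pv (ext N r * pi)%g k' == N.-1).
    by congr (_ && _); exact: CE.
  case h: (contains pi q) => //=.
  have kN' : (k' < N)%N by move: kN; clear; lia.
  rewrite (pv_extM r pi kN kN') /ef.
  by rewrite (ltn_trans (ltnSn k') (ltnSn _)) r_top.
move=> /andP [h _]; move: h; rewrite -/(is_true _) => h.
have {h} h : contains pi q by rewrite -CE.
rewrite [RHS]mulrC.
exact: (weight Heq Ht (isT : (0 < K)%N) kN r (contains_inc (leqnn K) h (inc1 (leqnn K)))).
Qed.

End Main.

Unset Implicit Arguments.
Local Open Scope ring_scope.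

Theorem theorem3p6 (R : realFieldType) (N : nat) (c : statistic) (theta : R)
    (k : nat) :
  prefix_equivariant N c -> 0 < theta -> (2 <= k)%N -> (k <= N)%N ->
  let p : 'S_k.-1 := 1%g in
  let q : 'S_k := 1%g in
  let sumR := \sum_(r : 'S_k | (r != q) && contains r p)
                 theta ^ ((c k r)%:Z - (c k q)%:Z) in
  Schat N c theta p = Sbarhat N c theta q + Schat N c theta q * sumR /\
  Shat N c theta p = Shat N c theta q * sumR.
Proof.
move=> Heq Ht; case: k => [|[|k']] // _ kN.
intros p q sumR; subst p q sumR.
split; [exact: (part1 Heq Ht kN) | exact: (part2 Heq Ht kN)].
Qed.
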